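(* Let $\kappa > 1$. Consider a finite set $\mathcal{S}$ of sensors placed in a square region $R$ of dimensions $s \times s$, where each sensor $i$ has sensing region $D_i$ equal to the closed disk of radius $1$ centered at its location, and each sensor has an initial battery life of $1$ unit of time. Let $d_R$ denote the depth of $R$ (defined below) and let $\mathcal{L}^*$ denote the maximum lifetime of the system under optimal scheduling (defined below). Then $\mathcal{L}^* = O(\kappa \cdot d_R)$, i.e., there is an absolute constant $c>0$, independent of the instance, such that $\mathcal{L}^* \le c\,\kappa\, d_R$.
   Context: A pair of points $(p,q)$ is a $\kappa$-pair if the distance between them is $\kappa$. A curve is a $\kappa$-curve if its endpoints form a $\kappa$-pair. A set of sensors $C \subseteq \mathcal{S}$ is a $\kappa$-weak cover if every $\kappa$-curve contained in $R$ intersects $\bigcup_{i \in C} D_i$. A point $p$ is covered by sensor $i$ if $p \in D_i$. The depth of a point $p$ is the number of sensors in $\mathcal{S}$ covering $p$, and the depth $d_R$ of the region $R$ is the maximum depth of any point of $R$. A schedule consists of a collection $\{C_1,\dots,C_k\}$ of $\kappa$-weak covers together with activation times $\delta_1,\dots,\delta_k \ge 0$ (cover $C_j$ is active for time $\delta_j$), subject to the battery constraint that each sensor's total active time $\sum_{j : i \in C_j} \delta_j$ is at most its battery life $1$. The lifetime of such a schedule is $\sum_{j=1}^k \delta_j$, and $\mathcal{L}^*$ is the maximum (supremum) lifetime over all such schedules. *)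

(* Defs.v *)
From HB Require Import structures.
From mathcomp Require Import all_boot all_order all_algebra.
From mathcomp Require Import all_classical all_reals all_analysis.
From mathcomp Require Import Rstruct Rstruct_topology.
From Stdlib Require Import Rdefinitions.

Set Implicit Arguments.
Unset Strict Implicit.
Unset Printing Implicit Defensive.
Import Order.TTheory GRing.Theory Num.Theory.
Local Open Scope classical_set_scope.
Local Open Scope ring_scope.

Definition plane_pt := (R * R)%type.

Definition dist (p q : plane_pt) : R :=
  Num.sqrt ((p.1 - q.1) ^+ 2 + (p.2 - q.2) ^+ 2).

Definition Region (s : R) : set plane_pt :=
  [set p | 0 <= p.1 <= s /\ 0 <= p.2 <= s].

Definition unit_I : set R := [set t | 0 <= t <= 1].

Definition covered n (loc : 'I_n -> plane_pt) (i : 'I_n) (p : plane_pt) : bool :=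
  dist p (loc i) <= 1.

Definition kappa_curve_in (kappa s : R) (g : R -> plane_pt) : Prop :=
  {within unit_I, continuous g} /\
  (forall t, unit_I t -> Region s (g t)) /\
  dist (g 0) (g 1) = kappa.

Definition weak_cover n (loc : 'I_n -> plane_pt) (kappa s : R) (C : {set 'I_n}) : Prop :=
  forall g, kappa_curve_in kappa s g ->
    exists t, unit_I t /\ exists2 i, i \in C & covered loc i (g t).

Definition depth n (loc : 'I_n -> plane_pt) (p : plane_pt) : nat :=
  #|[set i | covered loc i p]|.

Definition depth_region n (loc : 'I_n -> plane_pt) (s : R) : \bar R :=
  ereal_sup [set ((depth loc p)%:R)%:E | p in Region s].

Definition schedule n := seq ({set 'I_n} * R).

Definition valid_schedule n (loc : 'I_n -> plane_pt) (kappa s : R) (S : schedule n) : Prop :=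
  (forall Cd, Cd \in S -> weak_cover loc kappa s Cd.1 /\ 0 <= Cd.2) /\
  (forall i : 'I_n, \sum_(Cd <- S | i \in Cd.1) Cd.2 <= 1).

Definition lifetime n (S : schedule n) : R := \sum_(Cd <- S) Cd.2.

Definition Lstar n (loc : 'I_n -> plane_pt) (kappa s : R) : \bar R :=
  ereal_sup [set (lifetime S)%:E | S in valid_schedule loc kappa s].

(* Main.v *)
Require Import Defs.
From HB Require Import structures.
From mathcomp Require Import all_boot all_order all_algebra.
From mathcomp Require Import ring lra zify.
From mathcomp Require Import all_classical all_reals all_analysis.
From mathcomp Require Import Rstruct Rstruct_topology.
From Stdlib Require Import Rdefinitions.
Import Order.TTheory GRing.Theory Num.Theory.
Local Open Scope classical_set_scope.
Local Open Scope ring_scope.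
Definition gam (a b : R) (t : R) : plane_pt := (a * Num.min (2*t) 1, b * Num.max (2*t - 1) 0).

Lemma gam_cont a b : continuous (gam a b).
Proof.
move=> x. rewrite /gam /continuous_at. apply: (@cvg_pair _ _ _ _ (nbhs (a * Num.min (2 * x) 1)) (nbhs (b * Num.max (2 * x - 1) 0))).
- apply: cvgMl_tmp.
  have := @continuous_min R R (fun t => 2 * t) (fun=> 1) x.
  apply.
  + apply: cvgMl_tmp; exact: cvg_id.
  + exact: cvg_cst.
- apply: cvgMl_tmp.
  have := @continuous_max R R (fun t => 2 * t - 1) (fun=> 0) x.
  apply.
  + apply: cvgB; [apply: cvgMl_tmp; exact: cvg_id| exact: cvg_cst].
  + exact: cvg_cst.
Qed.

Local Open Scope nat_scope.
Lemma count_cells n (loc : 'I_n -> plane_pt) (B : {set 'I_n}) (k1 k2 : nat)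
  (f1 f2 : 'I_n -> nat) (m : nat) :
  (forall i, i \in B -> (f1 i <= k1)%N /\ (f2 i <= k2)%N) ->
  (forall i j, i \in B -> j \in B -> f1 i = f1 j -> f2 i = f2 j -> covered loc i (loc j)) ->
  (forall j, (depth loc (loc j) <= m)%N) ->
  (#|B| <= k1.+1 * k2.+1 * m)%N.
Proof.
move=> Hb Hc Hm.
pose p i : 'I_k1.+1 * 'I_k2.+1 := (inord (f1 i), inord (f2 i)).
rewrite -sum1_card (partition_big p xpredT) //=.
apply: (@leq_trans (\sum_(j : 'I_k1.+1 * 'I_k2.+1) m)); last first.
  by rewrite sum_nat_const card_prod !card_ord mulnC.
apply: leq_sum => j _.
case: (pickP [pred i | (i \in B) && (p i == j)]) => [i0 /andP[Hi0 /eqP Hp0]| Hnone]; last first.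
  by rewrite big_pred0.
rewrite sum1dep_card.
apply: leq_trans (Hm i0). rewrite /depth. apply: subset_leq_card.
apply/fintype.subsetP => i; rewrite inE => /andP[Hi /eqP Hp]; rewrite inE.
have [h1 h2] := Hb i Hi; have [h01 h02] := Hb i0 Hi0.
rewrite -Hp0 in Hp; case: Hp => E1 E2.
apply: Hc => //.
- by rewrite -(@inordK k1 (f1 i)) ?ltnS // E1 inordK // ltnS.
- by rewrite -(@inordK k2 (f2 i)) ?ltnS // E2 inordK // ltnS.
Qed.
Local Open Scope ring_scope.

Lemma trunc_close (u w : R) : 0 <= u -> 0 <= w ->
  Num.truncn (2*u) = Num.truncn (2*w) -> `|u - w| < 1/2.
Proof.
move=> hu hw E.
have hu2 : 0 <= 2 * u by lra.
have hw2 : 0 <= 2 * w by lra.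
have /andP[a1 a2] := truncn_itv hu2.
have /andP[b1 b2] := truncn_itv hw2.
rewrite E in a1 a2.
move: a1 a2 b1 b2; set k := Num.truncn (2 * w) => a1 a2 b1 b2.
have kS : (k.+1)%:R = k%:R + 1 :> R by rewrite -addn1 natrD.
rewrite kS in a2 b2.
rewrite ltr_norml; apply/andP; split; lra.
Qed.

Lemma dist_le1 (p q : plane_pt) :
  `|p.1 - q.1| < 1/2 -> `|p.2 - q.2| < 1/2 -> dist p q <= 1.
Proof.
rewrite !ltr_norml => /andP[h1 h2] /andP[h3 h4].
rewrite /dist -sqrtr1 ler_sqrt //.
nra.
Qed.

Lemma dist_coord (p q : plane_pt) :
  dist p q <= 1 -> `|p.1 - q.1| <= 1 /\ `|p.2 - q.2| <= 1.
Proof.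
rewrite /dist -sqrtr1 ler_sqrt // => h.
have h1 : (p.1 - q.1) ^+ 2 <= 1 by have := sqr_ge0 (p.2 - q.2); lra.
have h2 : (p.2 - q.2) ^+ 2 <= 1 by have := sqr_ge0 (p.1 - q.1); lra.
have k : forall d : R, d ^+ 2 <= 1 -> `|d| <= 1.
  move=> d hd; rewrite -(real_normK (num_real d)) in hd; have := normr_ge0 d.
  set x := `|d| in hd *; move=> hx.
  rewrite leNgt; apply/negP => hx1; nra.
by rewrite sqrtr1; split; apply: k.
Qed.

Lemma sched_bound n (A : {set 'I_n}) (S : schedule n) :
  (forall Cd, Cd \in S -> 0 <= Cd.2 /\ exists2 i, i \in A & i \in Cd.1) ->
  (forall i, \sum_(Cd <- S | i \in Cd.1) Cd.2 <= 1) ->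
  lifetime S <= #|A|%:R.
Proof.
move=> H1 H2.
apply: (@le_trans _ _ (\sum_(Cd <- S) \sum_(i in A) (if i \in Cd.1 then Cd.2 else 0))).
  rewrite /lifetime big_seq [X in _ <= X]big_seq; apply: ler_sum => Cd HCd.
  have [h0 [i hiA hiC]] := H1 Cd HCd.
  rewrite (bigD1 i) //= hiC lerDl. apply: sumr_ge0 => j _; case: ifP => //.
rewrite exchange_big /=.
rewrite -sum1_card natr_sum. apply: ler_sum => i _. rewrite -big_mkcond. exact: H2.
Qed.

Theorem theorem1 :
  exists c : R, 0 < c /\
    forall (kappa s : R) (n : nat) (loc : 'I_n -> plane_pt),
      1 < kappa ->
      (exists p q, Region s p /\ Region s q /\ dist p q = kappa) ->
      (forall i, Region s (loc i)) ->
      (Lstar loc kappa s <= (c * kappa)%:E * depth_region loc s)%E.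
Proof.
exists 40; split; first lra.
move=> kappa s n loc hk [p [q [hp [hq hpq]]]] hloc.
move: (hp) (hq) => [/andP[p10 p1s] /andP[p20 p2s]] [/andP[q10 q1s] /andP[q20 q2s]].
have s0 : 0 <= s by lra.
have k2 : kappa ^+ 2 <= 2 * s ^+ 2.
  rewrite -hpq /dist sqr_sqrtr; last by rewrite addr_ge0 // sqr_ge0.
  nra.
pose a := Num.min s kappa.
have a0 : 0 <= a by rewrite le_min; apply/andP; split; lra.
have as_ : a <= s by rewrite ge_min lexx.
have ak : a <= kappa by rewrite ge_min lexx orbT.
have ab0 : 0 <= kappa ^+ 2 - a ^+ 2 by nra.
pose b := Num.sqrt (kappa ^+ 2 - a ^+ 2).
have b0 : 0 <= b by exact: sqrtr_ge0.
have bsq : b ^+ 2 = kappa ^+ 2 - a ^+ 2 by rewrite sqr_sqrtr.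
have bs : b <= s.
  have : b ^+ 2 <= s ^+ 2.
    rewrite bsq /a; case: (lerP s kappa) => h.
    - lra.
    - have := sqr_ge0 s; lra.
  move=> h; rewrite leNgt; apply/negP => h'; nra.
have bk : b <= kappa.
  rewrite leNgt; apply/negP => h'; nra.
have hcurve : kappa_curve_in kappa s (gam a b).
  split; [exact: continuous_subspaceT (gam_cont a b) | split].
  - move=> t /andP[t0 t1]; rewrite /Region /gam /=.
    have m0 : 0 <= Num.min (2*t) 1 by rewrite le_min; apply/andP; split; lra.
    have m1 : Num.min (2*t) 1 <= 1 by rewrite ge_min lexx orbT.
    have M0 : 0 <= Num.max (2*t-1) 0 by rewrite le_max lexx orbT.
    have M1 : Num.max (2*t-1) 0 <= 1 by rewrite ge_max; apply/andP; split; lra.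
    split; apply/andP; split.
    + exact: mulr_ge0.
    + by apply: le_trans (ler_wpM2l a0 m1) _; rewrite mulr1.
    + exact: mulr_ge0.
    + by apply: le_trans (ler_wpM2l b0 M1) _; rewrite mulr1.
  - rewrite /gam /dist /= mulr0 mulr1 (@min_l _ _ 0) ?ler01 // (@min_r _ _ 2) ?ler1n //.
    rewrite (@max_r _ _ (0 - 1)) ?subr_le0 ?ler01 //.
    rewrite (@max_l _ _ (2 - 1)) ?subr_ge0 ?ler1n //.
    have -> : (a * 0 - a * 1) ^+ 2 + (b * 0 - b * (2 - 1)) ^+ 2 = a ^+ 2 + b ^+ 2 by ring.
    rewrite bsq addrC subrK.
    by rewrite sqrtr_sqr ger0_norm //; lra.
pose m := (\max_(j : 'I_n) depth loc (loc j))%N.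
have hm : forall j, leq (depth loc (loc j)) m by move=> j; exact: leq_bigmax.
have dR0 : forall x, Region s x -> (((depth loc x)%:R)%:E <= depth_region loc s)%E.
  by move=> x hx; apply: ereal_sup_ge; exists ((depth loc x)%:R)%:E => //; exists x.
have hmdR : ((m%:R)%:E <= depth_region loc s)%E.
  apply: (big_ind (fun x : nat => ((x%:R)%:E <= depth_region loc s)%E)).
  - by apply: le_trans (dR0 p hp); rewrite lee_fin ler0n.
  - by move=> x y hx hy; case: (leqP x y).
  - by move=> i _; exact: dR0 (hloc i).
pose k := Num.truncn (2 * kappa + 2).
pose Ah := finset (fun i => ((loc i).2 <= 1) && ((loc i).1 <= kappa + 1)).
pose Av := finset (fun i => [&& a - 1 <= (loc i).1, (loc i).1 <= a + 1 & (loc i).2 <= kappa + 1]).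
have cAh : leq #|Ah| (muln (muln k.+1 3) m).
  apply: (@count_cells n loc Ah k 2 (fun i => Num.truncn (2 * (loc i).1))
     (fun i => Num.truncn (2 * (loc i).2)) m) => //.
  - move=> i; rewrite inE => /andP[h1 h2].
    have [/andP[x0 xs] /andP[y0 ys]] := hloc i; split.
    + have hh : 2 * (loc i).1 <= 2 * kappa + 2 by lra.
      exact: le_truncn hh.
    + have hh : 2 * (loc i).2 < 3 by lra.
      by rewrite truncn_le_nat.
  - move=> i j _ _ e1 e2.
    have [/andP[x0 xs] /andP[y0 ys]] := hloc i.
    have [/andP[x0' xs'] /andP[y0' ys']] := hloc j.
    by apply: dist_le1; apply: trunc_close => //; rewrite ?e1 ?e2.
have cAv : leq #|Av| (muln (muln 5 k.+1) m).
  apply: (@count_cells n loc Av 4 k (fun i => Num.truncn (2 * (a + 1 - (loc i).1)))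
     (fun i => Num.truncn (2 * (loc i).2)) m) => //.
  - move=> i; rewrite inE => /and3P[h1 h2 h3].
    have [/andP[x0 xs] /andP[y0 ys]] := hloc i; split.
    + have hh : 2 * (a + 1 - (loc i).1) < 5 by lra.
      by rewrite truncn_le_nat.
    + have hh : 2 * (loc i).2 <= 2 * kappa + 2 by lra.
      exact: le_truncn hh.
  - move=> i j; rewrite !inE => /and3P[h1 h2 h3] /and3P[h1' h2' h3'] e1 e2.
    have [/andP[x0 xs] /andP[y0 ys]] := hloc i.
    have [/andP[x0' xs'] /andP[y0' ys']] := hloc j.
    apply: dist_le1; last by apply: trunc_close => //; rewrite ?e1 ?e2.
    have u0 : 0 <= a + 1 - (loc j).1 by lra.
    have w0 : 0 <= a + 1 - (loc i).1 by lra.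
    have := trunc_close _ _ u0 w0 (esym e1).
    rewrite !ltr_norml => /andP[g1 g2]; apply/andP; split; lra.
pose A := Ah :|: Av.
have cA : leq #|A| (muln (muln 8 k.+1) m).
  rewrite /A cardsU; apply: leq_trans (leq_subr _ _) _.
  apply: leq_trans (leq_add cAh cAv) _.
  move: (k.+1) (m) => x y; clear; lia.
have kb : k%:R <= 2 * kappa + 2.
  have h0 : 0 <= 2 * kappa + 2 by lra.
  by rewrite /k truncn_le.
have cAr : #|A|%:R <= 40 * kappa * m%:R.
  apply: (@le_trans _ _ ((muln (muln 8 k.+1) m)%:R)); first by rewrite ler_nat.
  have e : (k.+1)%:R = k%:R + 1 :> R by rewrite -addn1 natrD.
  rewrite !natrM e.
  have m0 : 0 <= m%:R :> R by exact: ler0n.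
  have lin : 8 * (k%:R + 1) <= 40 * kappa by lra.
  exact (ler_wpM2r m0 lin).
have hL : forall S, valid_schedule loc kappa s S -> lifetime S <= #|A|%:R.
  move=> S [H1 H2]; apply: sched_bound => // Cd HCd.
  have [hw h0] := H1 Cd HCd; split => //.
  have [t [ht [i hiC hcov]]] := hw _ hcurve.
  exists i => //.
  have [c1 c2] := dist_coord _ _ hcov.
  move: ht => /andP[t0 t1].
  have [/andP[x0 xs] /andP[y0 ys]] := hloc i.
  rewrite /A !inE; apply/orP.
  move: c1 c2; rewrite /gam /=.
  case: (lerP (2 * t) 1) => ht c1 c2.
  - have e : Num.max (2 * t - 1) 0 = 0 by apply: max_r; lra.
    rewrite e mulr0 in c2.
    have g1 : a * (2 * t) <= a.
      by have := ler_wpM2l a0 ht; rewrite mulr1.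
    have g2 : 0 <= a * (2 * t) by apply: mulr_ge0; lra.
    move: c1 c2; rewrite !ler_norml => /andP[c1 c1'] /andP[c2 c2'].
    left; apply/andP; split; lra.
  - have e : Num.max (2 * t - 1) 0 = 2 * t - 1 by apply: max_l; lra.
    rewrite e in c2; rewrite mulr1 in c1.
    have g1 : b * (2 * t - 1) <= b.
      have h21 : 2 * t - 1 <= 1 by lra.
      by have := ler_wpM2l b0 h21; rewrite mulr1.
    have g2 : 0 <= b * (2 * t - 1) by apply: mulr_ge0; lra.
    move: c1 c2; rewrite !ler_norml => /andP[c1 c1'] /andP[c2 c2'].
    right; apply/and3P; split; lra.
have h1 : (Lstar loc kappa s <= (#|A|%:R)%:E)%E.
  apply: ge_ereal_sup => _ [S hS <-]; rewrite lee_fin; exact: hL.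
apply: le_trans h1 _.
have hk0 : (0 <= (40 * kappa)%:E)%E by rewrite lee_fin; lra.
apply: le_trans (lee_wpmul2l hk0 hmdR).
by rewrite -EFinM lee_fin.
Qed.
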